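(* Let $M \in \mathbb{Z}^+$ and let $p_1$ be a real number with $0.5 \le p_1 < \frac{M+1.5}{M+3}$. Set $p_2 = 1 - p_1$ and $\delta = \frac{p_1 - 0.5}{M}$, and define for $m \in \{0,1,\dots,M\}$ the prior weights $$\omega_{\mathrm{FE}}(m) = p_1 - \delta m, \qquad \omega_{\mathrm{HPO}}(m) = p_2 + \delta m.$$ Define integer sequences $N_{\mathrm{FE}}(m), N_{\mathrm{HPO}}(m)$ for $m = 0,1,\dots,M$ by $N_{\mathrm{FE}}(0) = N_{\mathrm{HPO}}(0) = 0$ and, for $0 \le m \le M-1$, $$I(m+1) = \begin{cases} 1, & \text{if } \dfrac{\omega_{\mathrm{FE}}(m)}{1+N_{\mathrm{FE}}(m)} > \dfrac{\omega_{\mathrm{HPO}}(m)}{1+N_{\mathrm{HPO}}(m)},\\[2mm] 0, & \text{otherwise,}\end{cases}$$ $$N_{\mathrm{FE}}(m+1) = N_{\mathrm{FE}}(m) + I(m+1), \qquad N_{\mathrm{HPO}}(m+1) = N_{\mathrm{HPO}}(m) + 1 - I(m+1).$$ Then $$N_{\mathrm{FE}}(M),\ N_{\mathrm{HPO}}(M) \in \left\{ \left\lfloor \tfrac{M}{2} \right\rfloor, \left\lceil \tfrac{M}{2} \right\rceil \right\}.$$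
   Context: This models a two-armed selector that, at each of $M$ iterations, chooses between two actions FE and HPO. The selection rule above is the reduction, under a neutral reward signal (equal constant exploitation values for both arms), of the rule choosing $\arg\max_{a\in\{\mathrm{FE},\mathrm{HPO}\}} \omega_a(m)\frac{\sqrt{N_{\mathrm{FE}}(m)+N_{\mathrm{HPO}}(m)}}{1+N_a(m)}$ after dividing out the common factor; $I(m+1)=1$ means FE is chosen at iteration $m+1$, and ties are resolved in favor of HPO. $N_a(m)$ is the number of times action $a$ has been chosen in the first $m$ iterations, so $N_{\mathrm{FE}}(m)+N_{\mathrm{HPO}}(m)=m$. *)

(* Defs.v *)
From Stdlib Require Import Reals Lra Lia.
Open Scope R_scope.

Definition delta (M : nat) (p1 : R) : R := (p1 - 1/2) / INR M.
Definition omega_FE (M : nat) (p1 : R) (m : nat) : R := p1 - delta M p1 * INR m.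
Definition omega_HPO (M : nat) (p1 : R) (m : nat) : R :=
  (1 - p1) + delta M p1 * INR m.

(* Selection indicator I(m+1): true (=1) iff FE chosen, given counts (nFE, nHPO)
   after m iterations; ties go to HPO. *)
Definition choose_FE (M : nat) (p1 : R) (m nFE nHPO : nat) : bool :=
  if Rlt_dec (omega_HPO M p1 m / (1 + INR nHPO))
             (omega_FE M p1 m / (1 + INR nFE))
  then true else false.

Fixpoint counts (M : nat) (p1 : R) (m : nat) : nat * nat :=
  match m with
  | O => (0%nat, 0%nat)
  | S k => let (a, b) := counts M p1 k in
           if choose_FE M p1 k a b then (S a, b) else (a, S b)
  end.

Definition N_FE (M : nat) (p1 : R) (m : nat) : nat := fst (counts M p1 m).
Definition N_HPO (M : nat) (p1 : R) (m : nat) : nat := snd (counts M p1 m).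

(* Main.v *)
Require Import Defs.
From Stdlib Require Import Reals Lra Lia.
Open Scope R_scope.

Lemma div_lt_iff (A B u v : R) : 0 < u -> 0 < v -> (A / u < B / v <-> A * v < B * u).
Proof.
  intros Hu Hv. split; intro H.
  - assert (E1 : A = A / u * u) by (field; lra).
    assert (E2 : B = B / v * v) by (field; lra).
    rewrite E1, E2.
    replace (A / u * u * v) with ((A/u) * (u*v)) by ring.
    replace (B / v * v * u) with ((B/v) * (u*v)) by ring.
    apply Rmult_lt_compat_r; [apply Rmult_lt_0_compat|]; lra.
  - assert (E1 : A / u = (A * v) * / (u*v)) by (field; lra).
    assert (E2 : B / v = (B * u) * / (u*v)) by (field; lra).
    rewrite E1, E2. apply Rmult_lt_compat_r; [|lra].
    apply Rinv_0_lt_compat, Rmult_lt_0_compat; lra.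
Qed.

Definition gg (M : nat) (p1 : R) (m : nat) : R :=
  2 * ((p1 - 1/2) / INR M) * (INR M - INR m) * (INR m + 2).

Lemma choose_iff M p1 m a b : (1 <= M)%nat ->
  choose_FE M p1 m a b = true <->
  INR a - INR b < 2 * ((p1-1/2)/INR M) * (INR M - INR m) * (INR a + INR b + 2).
Proof.
  intros HM.
  assert (HMr : 1 <= INR M) by (apply (le_INR 1); lia).
  assert (Ha := pos_INR a). assert (Hb := pos_INR b).
  set (D := (p1 - 1/2) / INR M).
  assert (Hp : p1 = 1/2 + D * INR M) by (unfold D; field; lra).
  unfold choose_FE, omega_HPO, omega_FE, delta. fold D.
  destruct (Rlt_dec _ _) as [H|H].
  - split; [intros _|reflexivity].
    rewrite div_lt_iff in H by lra. rewrite Hp in H. lra.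
  - split; [discriminate|]. intro H'. exfalso. apply H.
    rewrite div_lt_iff by lra. rewrite Hp. lra.
Qed.

Lemma inv M p1 m : (1 <= M)%nat -> 1/2 <= p1 ->
  p1 < (INR M + 3/2) / (INR M + 3) -> (m <= M)%nat ->
  let (a, b) := counts M p1 m in
  (a + b = m)%nat /\ -1 <= INR a - INR b /\ INR a - INR b < 2 + gg M p1 m.
Proof.
  intros HM Hp1 Hp2. induction m as [|m IH]; intro Hm.
  - simpl. unfold gg. simpl.
    assert (HMr : 1 <= INR M) by (apply (le_INR 1); lia).
    assert (0 <= (p1 - 1/2) / INR M) by (apply Rmult_le_pos; [lra|left; apply Rinv_0_lt_compat; lra]).
    split; [reflexivity|]. split; [lra|]. nra.
  - specialize (IH ltac:(lia)). simpl. destruct (counts M p1 m) as [a b].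
    destruct IH as [Hab [Hlo Hhi]].
    assert (HMr : 1 <= INR M) by (apply (le_INR 1); lia).
    assert (Hc : 0 <= (p1 - 1/2) / INR M) by (apply Rmult_le_pos; [lra|left; apply Rinv_0_lt_compat; lra]).
    assert (Hc2 : (p1 - 1/2) / INR M * (2 * INR M + 6) < 1).
    { apply (Rmult_lt_compat_r (INR M + 3)) in Hp2; [|lra].
      unfold Rdiv at 1 in Hp2. rewrite Rmult_assoc, Rinv_l in Hp2 by lra.
      assert (E : (p1 - 1/2) / INR M * (2 * INR M + 6) = (p1 - 1/2) * (2 * INR M + 6) / INR M) by (field; lra).
      rewrite E. apply (Rmult_lt_reg_r (INR M)); [lra|]. unfold Rdiv. rewrite Rmult_assoc, Rinv_l by lra. nra. }
    assert (Hmr : INR m + 1 <= INR M) by (rewrite <- S_INR; apply le_INR; lia).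
    assert (Hm0 := pos_INR m).
    assert (Habr : INR a + INR b = INR m) by (rewrite <- plus_INR; f_equal; lia).
    assert (Hg' : gg M p1 m - 1 < gg M p1 (S m)).
    { unfold gg. rewrite S_INR.
      set (c := (p1 - 1/2) / INR M) in *. nra. }
    assert (Hg0 : 0 <= gg M p1 m).
    { unfold gg. set (c := (p1 - 1/2) / INR M) in *. assert (0 <= c * (2 * INR M - 2 * INR m - 2)) by (apply Rmult_le_pos; lra). nra. }
    destruct (choose_FE M p1 m a b) eqn:E.
    + apply choose_iff in E; [|lia]. rewrite Habr in E. fold (gg M p1 m) in E.
      split; [lia|]. rewrite S_INR. lra.
    + assert (E' : ~ (INR a - INR b < gg M p1 m)).
      { intro H. unfold gg in H. pose proof (proj2 (choose_iff M p1 m a b ltac:(lia))) as Hc3.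
        rewrite Habr in Hc3. specialize (Hc3 H). congruence. }
      split; [lia|]. rewrite S_INR. lra.
Qed.

Theorem theorem1 (M : nat) (p1 : R) :
  (1 <= M)%nat ->
  1/2 <= p1 ->
  p1 < (INR M + 3/2) / (INR M + 3) ->
  (N_FE M p1 M = Nat.div M 2 \/ N_FE M p1 M = Nat.div (M + 1) 2) /\
  (N_HPO M p1 M = Nat.div M 2 \/ N_HPO M p1 M = Nat.div (M + 1) 2).
Proof.
  intros HM H1 H2.
  pose proof (inv M p1 M HM H1 H2 (le_n M)) as H.
  unfold N_FE, N_HPO. destruct (counts M p1 M) as [a b]. cbn [fst snd].
  destruct H as [Hab [Hlo Hhi]].
  assert (Hg : gg M p1 M = 0) by (unfold gg; ring).
  rewrite Hg in Hhi.
  assert (L1 : (b <= a + 1)%nat).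
  { apply INR_le. rewrite plus_INR. simpl. lra. }
  assert (L2 : (a < b + 2)%nat).
  { apply INR_lt. rewrite plus_INR. simpl. lra. }
  pose proof (Nat.div_mod M 2 ltac:(lia)).
  pose proof (Nat.mod_upper_bound M 2 ltac:(lia)).
  pose proof (Nat.div_mod (M+1) 2 ltac:(lia)).
  pose proof (Nat.mod_upper_bound (M+1) 2 ltac:(lia)).
  lia.
Qed.
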